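(* Let $\lambda\subseteq T^*\mathbb{C}^d$ be a positive Lagrangian, let $\lambda_1=\{x\in\mathbb{C}^d:\exists\xi\in\mathbb{C}^d,\ (x,\xi)\in\lambda\}$, $k=\dim_{\mathbb{C}}\lambda_1$ and $N=d-k$. Then there exists a quadratic form $\rho$ on $\mathbb{R}^d$ (with complex coefficients, extended bilinearly to $\mathbb{C}^d$) with ${\rm Im}\,\rho\ge 0$ on $\mathbb{R}^d$, such that: if $k=d$ then $$\lambda=\{(x,\rho'(x)):\ x\in\mathbb{C}^d\},$$ while if $0\le k\le d-1$ there exists an injective real matrix $L\in\mathbb{R}^{d\times N}$ such that ${\rm Re}(\operatorname{Ran}\rho')$ and ${\rm Im}(\operatorname{Ran}\rho')$ are contained in $(\operatorname{Ran}L)^\perp\subseteq\mathbb{R}^d$ (where $\operatorname{Ran}\rho'=\{\rho'(x):x\in\mathbb{C}^d\}$ and $\operatorname{Ran}L=L\mathbb{R}^N$), and $$\lambda=\{(x,\rho'(x)+L\theta):\ (x,\theta)\in\mathbb{C}^{d+N},\ L^tx=0\}.$$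
   Context: $T^*\mathbb{C}^d\simeq\mathbb{C}^{2d}$ carries the canonical symplectic form $\sigma((x,\xi),(x',\xi'))=\langle x',\xi\rangle-\langle x,\xi'\rangle$, with $\langle\cdot,\cdot\rangle$ the bilinear form $\langle z,w\rangle=\sum z_jw_j$. A Lagrangian is a complex linear subspace $\lambda$ with $\lambda=\{X:\sigma(X,Y)=0\ \forall Y\in\lambda\}$; it is positive if $i\sigma(\overline X,X)\ge0$ for all $X\in\lambda$. $\rho'$ denotes the gradient of $\rho$. *)

(* Defs.v *)
(* The complex field C^d is modelled by an arbitrary
   numClosedFieldType C (e.g. the complex numbers); "real" means Num.real. *)
From HB Require Import structures.
From mathcomp Require Import all_boot all_order all_algebra.
Set Implicit Arguments. Unset Strict Implicit. Unset Printing Implicit Defensive.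
Import Order.TTheory GRing.Theory Num.Theory.
Local Open Scope ring_scope.

Definition bdot (C : numClosedFieldType) (n : nat) (z w : 'rV[C]_n) : C :=
  (z *m w^T) 0 0.

(* points of T^*C^d are row vectors (x, xi) : 'rV_(d+d) ;
   sigma((x,xi),(x',xi')) = <x',xi> - <x,xi'> *)
Definition sigma (C : numClosedFieldType) (d : nat) (X Y : 'rV[C]_(d + d)) : C :=
  bdot (lsubmx Y) (rsubmx X) - bdot (lsubmx X) (rsubmx Y).

(* A subspace of T^*C^d is the row space of a square matrix A. *)
Definition lagrangian (C : numClosedFieldType) (d : nat) (A : 'M[C]_(d + d)) : Prop :=
  forall Y : 'rV[C]_(d + d),
    (Y <= A)%MS <-> (forall X : 'rV[C]_(d + d), (X <= A)%MS -> sigma X Y = 0).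

Definition conjv (C : numClosedFieldType) (m n : nat) (M : 'M[C]_(m, n)) :=
  map_mx (@Num.conj C) M.

Definition positive_lagrangian (C : numClosedFieldType) (d : nat) (A : 'M[C]_(d + d)) : Prop :=
  lagrangian A /\
  forall X : 'rV[C]_(d + d), (X <= A)%MS -> 0 <= 'i * sigma (conjv X) X.

(* lambda_1 = projection of lambda onto the x-component: row space of the
   first d columns of A; its dimension k. *)
Definition lambda1 (C : numClosedFieldType) (d : nat) (A : 'M[C]_(d + d)) : 'M[C]_(d + d, d) :=
  lsubmx A.

Definition qform (C : numClosedFieldType) (d : nat) (Q : 'M[C]_d) (x : 'rV[C]_d) : C :=
  (x *m Q *m x^T) 0 0.

Definition qgrad (C : numClosedFieldType) (d : nat) (Q : 'M[C]_d) (x : 'rV[C]_d) : 'rV[C]_d :=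
  x *m (Q + Q^T).

Definition is_real_mx (C : numClosedFieldType) (m n : nat) (M : 'M[C]_(m, n)) : Prop :=
  forall i j, M i j \is Num.real.

(* Main.v *)
Require Import Defs.
From HB Require Import structures.
From mathcomp Require Import all_boot all_order all_algebra.
From mathcomp Require Import ring.
Set Implicit Arguments. Unset Strict Implicit. Unset Printing Implicit Defensive.
Import Order.TTheory GRing.Theory Num.Theory.
Local Open Scope ring_scope.

Lemma bdotC (C : numClosedFieldType) n (z w : 'rV[C]_n) : bdot z w = bdot w z.
Proof. by rewrite /bdot -[z *m w^T]trmxK trmx_mul trmxK mxE. Qed.

Lemma bdotDl (C : numClosedFieldType) n (z1 z2 w : 'rV[C]_n) :
  bdot (z1 + z2) w = bdot z1 w + bdot z2 w.
Proof. by rewrite /bdot mulmxDl mxE. Qed.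

Lemma bdotDr (C : numClosedFieldType) n (z w1 w2 : 'rV[C]_n) :
  bdot z (w1 + w2) = bdot z w1 + bdot z w2.
Proof. by rewrite bdotC bdotDl !(bdotC _ z). Qed.

Lemma bdotZl (C : numClosedFieldType) n a (z w : 'rV[C]_n) :
  bdot (a *: z) w = a * bdot z w.
Proof. by rewrite /bdot -scalemxAl mxE. Qed.

Lemma bdotZr (C : numClosedFieldType) n a (z w : 'rV[C]_n) :
  bdot z (a *: w) = a * bdot z w.
Proof. by rewrite bdotC bdotZl bdotC. Qed.

Lemma bdotNl (C : numClosedFieldType) n (z w : 'rV[C]_n) :
  bdot (- z) w = - bdot z w.
Proof. by rewrite -scaleN1r bdotZl mulN1r. Qed.

Lemma bdotBl (C : numClosedFieldType) n (z1 z2 w : 'rV[C]_n) :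
  bdot (z1 - z2) w = bdot z1 w - bdot z2 w.
Proof. by rewrite bdotDl bdotNl. Qed.

Lemma bdot0l (C : numClosedFieldType) n (w : 'rV[C]_n) : bdot 0 w = 0.
Proof. by rewrite /bdot mul0mx mxE. Qed.

Lemma bdot0r (C : numClosedFieldType) n (w : 'rV[C]_n) : bdot w 0 = 0.
Proof. by rewrite bdotC bdot0l. Qed.

Lemma bdot_conj (C : numClosedFieldType) n (z w : 'rV[C]_n) :
  bdot (conjv z) (conjv w) = (bdot z w)^*.
Proof. by rewrite /bdot /conjv map_trmx -map_mxM mxE. Qed.

Lemma conjvK (C : numClosedFieldType) m n (M : 'M[C]_(m, n)) : conjv (conjv M) = M.
Proof. by apply/matrixP => i j; rewrite !mxE conjCK. Qed.

Lemma bdot_mul (C : numClosedFieldType) m n (u : 'rV[C]_m) (M : 'M[C]_(m, n)) (w : 'rV[C]_n) :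
  bdot (u *m M) w = (u *m (w *m M^T)^T) 0 0.
Proof. by rewrite /bdot trmx_mul trmxK mulmxA. Qed.

Lemma bdot_delta (C : numClosedFieldType) n (j : 'I_n) (z : 'rV[C]_n) :
  bdot (delta_mx 0 j) z = z 0 j.
Proof. by rewrite /bdot -rowE !mxE. Qed.

Lemma is_real_conjv (C : numClosedFieldType) m n (M : 'M[C]_(m, n)) :
  is_real_mx M -> conjv M = M.
Proof. by move=> h; apply/matrixP => i j; rewrite mxE conj_Creal. Qed.

Lemma pos_arg (C : numClosedFieldType) (b c1 c2 : C) :
  0 <= 'i * (c1 - c2) ->
  (forall t : C, 0 <= 'i * (t * b + t * t^* * c1 - t^* * b^* - t^* * t * c2)) ->
  b = 0.
Proof.
move=> hY H.
set h := 'i * (c1 - c2) in hY.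
set s := (1 + h)^-1.
have h1 : 0 < 1 + h by rewrite ltr_wpDr.
have s0 : 0 < s by rewrite invr_gt0.
have sr : s^* = s by apply: conj_Creal; apply: gtr0_real.
have := H ('i * b^* * s).
have -> : 'i * ('i * b^* * s * b + 'i * b^* * s * ('i * b^* * s)^* * c1 -
    ('i * b^* * s)^* * b^* - ('i * b^* * s)^* * ('i * b^* * s) * c2)
    = (s * (b * b^*)) * (s * h - 2%:R).
  rewrite !rmorphM /= conjCi conjCK sr /h.
  have ii : 'i * 'i = -1 :> C by rewrite -expr2 sqrCi.
  ring: ii.
move=> H0; case: (eqVneq b 0) => // nb; exfalso.
have n0 : 0 < b * b^* by rewrite mul_conjC_gt0.
have shl : s * h <= 1 by rewrite /s mulrC ler_pdivrMr // mul1r; rewrite lerDr ler01.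
have neg : s * h - 2%:R < 0.
  by rewrite subr_lt0; apply: le_lt_trans shl _; rewrite ltr1n.
have : 0 <= s * h - 2%:R by rewrite -(pmulr_rge0 _ (mulr_gt0 s0 n0)).
by move=> /(lt_le_trans neg); rewrite ltxx.
Qed.



Lemma conjv_mul (C : numClosedFieldType) m n p (M : 'M[C]_(m, n)) (N : 'M[C]_(n, p)) :
  conjv (M *m N) = conjv M *m conjv N.
Proof. by rewrite /conjv map_mxM. Qed.

Lemma conjv_tr (C : numClosedFieldType) m n (M : 'M[C]_(m, n)) :
  conjv (M^T) = (conjv M)^T.
Proof. by rewrite /conjv map_trmx. Qed.

Lemma conjvD (C : numClosedFieldType) m n (M N : 'M[C]_(m, n)) :
  conjv (M + N) = conjv M + conjv N.
Proof. by rewrite /conjv map_mxD. Qed.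

Lemma conjvB (C : numClosedFieldType) m n (M N : 'M[C]_(m, n)) :
  conjv (M - N) = conjv M - conjv N.
Proof. by rewrite /conjv map_mxB. Qed.

Lemma conjvZ (C : numClosedFieldType) m n a (M : 'M[C]_(m, n)) :
  conjv (a *: M) = a^* *: conjv M.
Proof. by rewrite /conjv map_mxZ. Qed.

Lemma conjv_row (C : numClosedFieldType) m n1 n2 (M : 'M[C]_(m, n1)) (N : 'M[C]_(m, n2)) :
  conjv (row_mx M N) = row_mx (conjv M) (conjv N).
Proof. by rewrite /conjv map_row_mx. Qed.

Lemma conjv0 (C : numClosedFieldType) m n : conjv (0 : 'M[C]_(m, n)) = 0.
Proof. by apply/matrixP => i j; rewrite !mxE conjC0. Qed.

Lemma sigma_row (C : numClosedFieldType) d (x1 e1 x2 e2 : 'rV[C]_d) :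
  sigma (row_mx x1 e1) (row_mx x2 e2) = bdot x2 e1 - bdot x1 e2.
Proof. by rewrite /sigma !row_mxKl !row_mxKr. Qed.

Lemma lag_orth (C : numClosedFieldType) d (A : 'M[C]_(d + d)) :
  lagrangian A -> forall X Y, (X <= A)%MS -> (Y <= A)%MS -> sigma X Y = 0.
Proof. by move=> hL X Y hX hY; apply: (proj1 (hL Y)) hY X hX. Qed.

Lemma orth_gen (C : numClosedFieldType) m d (M : 'M[C]_(m, d)) (xi : 'rV[C]_d) :
  (forall u : 'rV_m, bdot (u *m M) xi = 0) <-> xi *m M^T = 0.
Proof.
split=> [H|H u]; last by rewrite bdot_mul H trmx0 mulmx0 mxE.
apply/matrixP => i j; have := H (delta_mx 0 j).
by rewrite bdot_mul -rowE !mxE (ord1 i).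
Qed.

Definition Km (C : numClosedFieldType) d (A : 'M[C]_(d + d)) : 'M[C]_d :=
  kermx (lsubmx A)^T.

Lemma F_char (C : numClosedFieldType) d (A : 'M[C]_(d + d)) :
  lagrangian A -> forall xi, (row_mx (0 : 'rV_d) xi <= A)%MS <-> (xi <= Km A)%MS.
Proof.
move=> hL xi; rewrite /Km sub_kermx; split.
  move=> H; apply/eqP; apply/orth_gen => u.
  have := lag_orth hL (submxMl u A) H.
  rewrite -{1}(hsubmxK (u *m A)) sigma_row.
  rewrite bdot0l sub0r => /eqP.
  by rewrite oppr_eq0 -mulmx_lsub => /eqP.
move/eqP=> H; apply/(proj2 (hL _)) => X /submxP [u ->].
by rewrite -(hsubmxK (u *m A)) sigma_row bdot0l -mulmx_lsub (proj2 (orth_gen _ _) H) subrr.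
Qed.

Lemma W_orth (C : numClosedFieldType) d (A : 'M[C]_(d + d)) (w f : 'rV[C]_d) :
  (w <= lsubmx A)%MS -> (f <= Km A)%MS -> bdot w f = 0.
Proof.
case/submxP => u ->; rewrite /Km sub_kermx => /eqP H.
by rewrite bdot_mul H trmx0 mulmx0 mxE.
Qed.

Lemma conjF (C : numClosedFieldType) d (A : 'M[C]_(d + d)) :
  positive_lagrangian A -> forall xi : 'rV[C]_d, (xi <= Km A)%MS -> (conjv xi <= Km A)%MS.
Proof.
move=> [hL hP] xi hxi; rewrite /Km sub_kermx; apply/eqP/orth_gen => u.
rewrite mulmx_lsub.
set Y := u *m A; set x := lsubmx Y; set eta := rsubmx Y.
have hY : (Y <= A)%MS by apply: submxMl.
apply: (@pos_arg _ _ (bdot x (conjv eta)) (bdot (conjv x) eta)).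
  by have := hP Y hY; rewrite -(hsubmxK Y) conjv_row sigma_row.
move=> t.
have hX : (row_mx (t *: x) (xi + t *: eta) <= A)%MS.
  have -> : row_mx (t *: x) (xi + t *: eta) = row_mx 0 xi + t *: Y.
    by rewrite -[in RHS](hsubmxK Y) scale_row_mx add_row_mx add0r.
  by rewrite addmx_sub ?scalemx_sub // (proj2 (F_char hL xi)).
have E : bdot (conjv x) xi = (bdot x (conjv xi))^*.
  by rewrite -bdot_conj conjvK.
have := hP _ hX; rewrite conjv_row sigma_row !conjvD !conjvZ.
rewrite !bdotZl !bdotDr !bdotZr E.
set b := bdot x (conjv xi); set c1 := bdot x (conjv eta); set c2 := bdot (conjv x) eta.
set e := 'i * _; set e' := 'i * _.
suff -> : e' = e by [].
rewrite /e /e'; ring.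
Qed.



Lemma A1K (C : numClosedFieldType) d (A : 'M[C]_(d + d)) :
  lsubmx A *m (Km A)^T = 0.
Proof. by apply: trmx_inj; rewrite trmx_mul trmxK mulmx_ker trmx0. Qed.

Lemma rankK (C : numClosedFieldType) d (A : 'M[C]_(d + d)) :
  \rank (Km A) = (d - \rank (lsubmx A))%N.
Proof. by rewrite /Km mxrank_ker mxrank_tr. Qed.

Lemma Wchar (C : numClosedFieldType) d (A : 'M[C]_(d + d)) (w : 'rV[C]_d) :
  (w <= lsubmx A)%MS <-> w *m (Km A)^T = 0.
Proof.
split.
  by case/submxP => u ->; rewrite -mulmxA A1K mulmx0.
move=> H.
have sub : (w <= kermx (Km A)^T)%MS by rewrite sub_kermx H.
have A1sub : (lsubmx A <= kermx (Km A)^T)%MS by rewrite sub_kermx A1K.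
have rk : \rank (kermx (Km A)^T) = \rank (lsubmx A).
  by rewrite mxrank_ker mxrank_tr rankK subKn // rank_leq_col.
have := mxrank_leqif_sup A1sub; rewrite rk => /leqif_refl h.
exact: submx_trans sub h.
Qed.

Lemma conjK_sub (C : numClosedFieldType) d (A : 'M[C]_(d + d)) :
  positive_lagrangian A -> (conjv (Km A) <= Km A)%MS.
Proof.
move=> hA; apply/row_subP => i.
have -> : row i (conjv (Km A)) = conjv (row i (Km A)) by rewrite /conjv map_row.
by apply: conjF => //; apply: row_sub.
Qed.

Lemma conjW (C : numClosedFieldType) d (A : 'M[C]_(d + d)) (w : 'rV[C]_d) :
  positive_lagrangian A -> (w <= lsubmx A)%MS -> (conjv w <= lsubmx A)%MS.
Proof.
move=> hA; rewrite !Wchar => H.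
have /submxP [D eD] := conjK_sub hA.
have -> : Km A = conjv (D *m Km A) by rewrite -eD conjvK.
by rewrite conjv_mul trmx_mul mulmxA -conjv_tr -conjv_mul H conjv0 mul0mx.
Qed.

Lemma WK0 (C : numClosedFieldType) d (A : 'M[C]_(d + d)) (v : 'rV[C]_d) :
  positive_lagrangian A -> (v <= lsubmx A)%MS -> (v <= Km A)%MS -> v = 0.
Proof.
move=> hA hW hK; have := W_orth hW (conjF hA hK).
rewrite /bdot mxE.
under eq_bigr do rewrite !mxE.
move=> /psumr_eq0P H; apply/matrixP => i j; rewrite (ord1 i) mxE.
apply/eqP; rewrite -mul_conjC_eq0; apply/eqP; apply: H => // k _.
exact: mul_conjC_ge0.
Qed.

Lemma cap0 (C : numClosedFieldType) d (A : 'M[C]_(d + d)) :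
  positive_lagrangian A -> (<<lsubmx A>> :&: Km A = 0)%MS.
Proof.
move=> hA; apply/eqP/rowV0P => v; rewrite sub_capmx genmxE => /andP [hW hK].
exact: WK0 hA hW hK.
Qed.

Lemma full (C : numClosedFieldType) d (A : 'M[C]_(d + d)) :
  positive_lagrangian A -> row_full (<<lsubmx A>> + Km A)%MS.
Proof.
move=> hA; rewrite /row_full; apply/eqP.
have := mxrank_sum_cap <<lsubmx A>>%MS (Km A).
by rewrite cap0 // mxrank0 addn0 genmxE rankK subnKC // rank_leq_col.
Qed.

Definition Pm (C : numClosedFieldType) d (A : 'M[C]_(d + d)) : 'M[C]_d :=
  proj_mx <<lsubmx A>>%MS (Km A).

Definition Sm (C : numClosedFieldType) d (A : 'M[C]_(d + d)) : 'M[C]_d :=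
  Pm A *m pinvmx (lsubmx A) *m rsubmx A *m Pm A.

Lemma PW (C : numClosedFieldType) d (A : 'M[C]_(d + d)) (x : 'rV[C]_d) :
  (x *m Pm A <= lsubmx A)%MS.
Proof. by rewrite (submx_trans (proj_mx_sub _ _ _)) // genmxE. Qed.

Lemma PK (C : numClosedFieldType) d (A : 'M[C]_(d + d)) (x : 'rV[C]_d) :
  positive_lagrangian A -> (x - x *m Pm A <= Km A)%MS.
Proof. by move=> hA; apply: proj_mx_compl_sub; apply: submx_full; apply: full. Qed.

Lemma Pid (C : numClosedFieldType) d (A : 'M[C]_(d + d)) (x : 'rV[C]_d) :
  positive_lagrangian A -> (x <= lsubmx A)%MS -> x *m Pm A = x.
Proof. by move=> hA hx; apply: proj_mx_id; [apply: cap0 | rewrite genmxE]. Qed.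

Lemma SW (C : numClosedFieldType) d (A : 'M[C]_(d + d)) (x : 'rV[C]_d) :
  (x *m Sm A <= lsubmx A)%MS.
Proof. by rewrite /Sm mulmxA PW. Qed.

Lemma VS (C : numClosedFieldType) d (A : 'M[C]_(d + d)) (x : 'rV[C]_d) :
  positive_lagrangian A -> (row_mx (x *m Pm A) (x *m Sm A) <= A)%MS.
Proof.
move=> hA; set w := x *m Pm A.
set y := x *m (Pm A *m pinvmx (lsubmx A) *m rsubmx A).
have h1 : (row_mx w y <= A)%MS.
  have -> : row_mx w y = w *m pinvmx (lsubmx A) *m A.
    have ey : y = w *m pinvmx (lsubmx A) *m rsubmx A.
      by rewrite /y /w (mulmxA x (Pm A *m _)) (mulmxA x (Pm A)).
    have hw : (w <= lsubmx A)%MS by apply: PW.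
    rewrite ey; move: hw; set A1 := lsubmx A; set A2 := rsubmx A => hw.
    by rewrite -[in RHS](hsubmxK A) -/A1 -/A2 mul_mx_row mulmxKpV.
  exact: submxMl.
have h2 : (row_mx (0 : 'rV_d) (y - y *m Pm A) <= A)%MS.
  by apply/(F_char hA.1); apply: PK.
have -> : row_mx w (x *m Sm A) = row_mx w y - row_mx 0 (y - y *m Pm A).
  by rewrite opp_row_mx add_row_mx oppr0 addr0 opprB addrC subrK /y /Sm !mulmxA.
by rewrite addmx_sub // eqmx_opp.
Qed.



Lemma bdotP (C : numClosedFieldType) d (A : 'M[C]_(d + d)) (y z : 'rV[C]_d) :
  positive_lagrangian A -> (z <= lsubmx A)%MS -> bdot (y *m Pm A) z = bdot y z.
Proof.
move=> hA hz.
have -> : bdot y z = bdot (y - y *m Pm A) z + bdot (y *m Pm A) z by rewrite -bdotDl subrK.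
by rewrite [bdot (y - _) z]bdotC (W_orth hz (PK y hA)) add0r.
Qed.

Lemma S_sym (C : numClosedFieldType) d (A : 'M[C]_(d + d)) :
  positive_lagrangian A -> (Sm A)^T = Sm A.
Proof.
move=> hA.
have H : forall x y : 'rV[C]_d, bdot y (x *m Sm A) = bdot x (y *m Sm A).
  move=> x y; have := lag_orth hA.1 (VS x hA) (VS y hA).
  rewrite sigma_row !bdotP ?SW // => /eqP; rewrite subr_eq0 => /eqP.
  by rewrite bdotC => ->; rewrite bdotC.
apply/matrixP => i j; rewrite mxE.
have := H (delta_mx 0 j) (delta_mx 0 i).
by rewrite !bdot_delta -!rowE !mxE.
Qed.

Lemma charV (C : numClosedFieldType) d (A : 'M[C]_(d + d)) :
  positive_lagrangian A -> forall Y : 'rV[C]_(d + d),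
  (Y <= A)%MS <-> exists x f : 'rV[C]_d,
     [/\ (x <= lsubmx A)%MS, (f <= Km A)%MS & Y = row_mx x (x *m Sm A + f)].
Proof.
move=> hA Y; split.
  move=> hY.
  have hw : (lsubmx Y <= lsubmx A)%MS.
    by case/submxP: hY => u ->; rewrite -mulmx_lsub submxMl.
  exists (lsubmx Y), (rsubmx Y - lsubmx Y *m Sm A); split => //.
    have : (Y - row_mx (lsubmx Y *m Pm A) (lsubmx Y *m Sm A) <= A)%MS.
      by rewrite addmx_sub // eqmx_opp VS.
    rewrite Pid // -{1}(hsubmxK Y) opp_row_mx add_row_mx subrr.
    by move/(F_char hA.1).
  by rewrite addrCA subrr addr0 hsubmxK.
case=> x [f [hx hf ->]].
have -> : row_mx x (x *m Sm A + f) = row_mx (x *m Pm A) (x *m Sm A) + row_mx 0 f.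
  by rewrite add_row_mx addr0 Pid.
by rewrite addmx_sub // ?VS // (proj2 (F_char hA.1 f)).
Qed.

Lemma P_real (C : numClosedFieldType) d (A : 'M[C]_(d + d)) (x : 'rV[C]_d) :
  positive_lagrangian A -> is_real_mx x -> conjv (x *m Pm A) = x *m Pm A.
Proof.
move=> hA hx; set w := x *m Pm A.
have e : w - conjv w = conjv (x - w) - (x - w).
  by rewrite conjvB (is_real_conjv hx) opprB [_ + (w - x)]addrC addrA subrK.
have h1 : (w - conjv w <= lsubmx A)%MS.
  by rewrite addmx_sub // ?eqmx_opp ?conjW // PW.
have h2 : (w - conjv w <= Km A)%MS.
  by rewrite e addmx_sub // ?eqmx_opp ?conjF // PK.
by have /eqP := WK0 hA h1 h2; rewrite subr_eq0 => /eqP.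
Qed.

Lemma Im_pos (C : numClosedFieldType) d (A : 'M[C]_(d + d)) (x : 'rV[C]_d) :
  positive_lagrangian A -> is_real_mx x ->
  0 <= 'Im (qform ((2%:R)^-1 *: Sm A) x).
Proof.
move=> hA hx.
set z := bdot (x *m Pm A) (x *m Sm A).
have e : qform ((2%:R)^-1 *: Sm A) x = (2%:R)^-1 * z.
  rewrite /qform -scalemxAr -scalemxAl mxE; congr (_ * _).
  by rewrite /z bdotP ?SW // bdotC.
have hz : 0 <= 'i * (z^* - z).
  have := hA.2 _ (VS x hA); rewrite conjv_row sigma_row P_real //.
  by rewrite -{1}(P_real hA hx) bdot_conj.
rewrite e ImE rmorphM /= fmorphV rmorph_nat.
have -> : 'i * ((2%:R)^-1 * z^* - (2%:R)^-1 * z) / 2%:R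
          = ('i * (z^* - z)) * ((2%:R)^-1 * (2%:R)^-1) :> C by ring.
by rewrite mulr_ge0 // mulr_ge0 // invr_ge0 ler0n.
Qed.



Lemma mapRe (C : numClosedFieldType) m n (M : 'M[C]_(m, n)) :
  map_mx (fun z : C => 'Re z) M = (2%:R)^-1 *: (M + conjv M).
Proof. by apply/matrixP => i j; rewrite !mxE ReE mulrC. Qed.

Lemma mapIm (C : numClosedFieldType) m n (M : 'M[C]_(m, n)) :
  map_mx (fun z : C => 'Im z) M = ('i / 2%:R) *: (conjv M - M).
Proof. by apply/matrixP => i j; rewrite !mxE ImE; ring. Qed.

Lemma range0 (C : numClosedFieldType) d (A : 'M[C]_(d + d)) (y v : 'rV[C]_d) :
  (y <= lsubmx A)%MS -> (v <= Km A)%MS -> conjv v = v ->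
  bdot (map_mx (fun z : C => 'Re z) y) v = 0 /\
  bdot (map_mx (fun z : C => 'Im z) y) v = 0.
Proof.
move=> hy hv rv.
have h0 : bdot y v = 0 := W_orth hy hv.
have h1 : bdot (conjv y) v = 0 by rewrite -[in LHS]rv bdot_conj h0 conjC0.
by rewrite mapRe mapIm !bdotZl bdotDl bdotBl h0 h1 addr0 subr0 !mulr0.
Qed.

Definition Gm (C : numClosedFieldType) d (A : 'M[C]_(d + d)) : 'M[C]_(d + d, d) :=
  col_mx (map_mx (fun z : C => 'Re z) (Km A)) (map_mx (fun z : C => 'Im z) (Km A)).

Lemma G_real (C : numClosedFieldType) d (A : 'M[C]_(d + d)) : is_real_mx (Gm A).
Proof.
move=> i j; rewrite /Gm mxE; case: (split i) => k; rewrite mxE.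
  exact: Creal_Re.
exact: Creal_Im.
Qed.

Lemma G_eq (C : numClosedFieldType) d (A : 'M[C]_(d + d)) :
  positive_lagrangian A -> (Gm A == Km A)%MS.
Proof.
move=> hA; apply/andP; split.
  rewrite /Gm col_mx_sub mapRe mapIm !scalemx_sub //;
    by rewrite ?addmx_sub ?eqmx_opp ?(conjK_sub hA).
have -> : Km A = map_mx (fun z : C => 'Re z) (Km A) + 'i *: map_mx (fun z : C => 'Im z) (Km A).
  by apply/matrixP => i j; rewrite !mxE -Crect.
rewrite addmx_sub // ?scalemx_sub //; apply/submxP.
  by exists (row_mx 1%:M 0); rewrite mul_row_col mul1mx mul0mx addr0.
by exists (row_mx 0 1%:M); rewrite mul_row_col mul1mx mul0mx add0r.
Qed.

Lemma orth_eq (C : numClosedFieldType) m1 m2 d (M : 'M[C]_(m1, d)) (N : 'M[C]_(m2, d)) (x : 'rV[C]_d) :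
  (M == N)%MS -> x *m M^T = 0 -> x *m N^T = 0.
Proof.
case/andP => _ /submxP [D ->] H.
by rewrite trmx_mul mulmxA H mul0mx.
Qed.

Unset Implicit Arguments.
Set Strict Implicit.


Theorem proposition4p4 (C : numClosedFieldType) (d : nat) (A : 'M[C]_(d + d)) :
  positive_lagrangian A ->
  let k := \rank (lambda1 A) in
  exists Q : 'M[C]_d,
    (forall x : 'rV[C]_d, is_real_mx x -> 0 <= 'Im (qform Q x)) /\
    (k = d ->
       forall Y : 'rV[C]_(d + d),
         (Y <= A)%MS <-> exists x : 'rV[C]_d, Y = row_mx x (qgrad Q x)) /\
    ((k < d)%N ->
       exists L : 'M[C]_(d, d - k),
         is_real_mx L /\
         (forall th : 'cV[C]_(d - k), is_real_mx th -> L *m th = 0 -> th = 0) /\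
         (forall (x : 'rV[C]_d) (th : 'cV[C]_(d - k)), is_real_mx th ->
            bdot (map_mx (fun z : C => 'Re z) (qgrad Q x)) (L *m th)^T = 0 /\
            bdot (map_mx (fun z : C => 'Im z) (qgrad Q x)) (L *m th)^T = 0) /\
         (forall Y : 'rV[C]_(d + d),
            (Y <= A)%MS <->
            exists (x : 'rV[C]_d) (th : 'cV[C]_(d - k)),
              x *m L = 0 /\ Y = row_mx x (qgrad Q x + (L *m th)^T))).
Proof.
move=> hA k.
exists ((2%:R)^-1 *: Sm A).
have qg : forall x, qgrad ((2%:R)^-1 *: Sm A) x = x *m Sm A.
  move=> x; rewrite /qgrad linearZ /= S_sym // -scalerDl.
  have -> : (2%:R)^-1 + (2%:R)^-1 = 1 :> C.
    by field.
  by rewrite scale1r.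
have rkK : \rank (Km A) = (d - k)%N by rewrite rankK.
split; first by move=> x hx; apply: Im_pos.
split.
  move=> kd Y; rewrite (charV hA); split.
    case=> x [f [hx hf ->]]; exists x.
    have K0 : Km A = 0 by apply/eqP; rewrite -mxrank_eq0 rkK kd subnn.
    move: hf; rewrite K0 submx0 => /eqP ->.
    by rewrite qg addr0.
  case=> x ->; exists x, 0; split.
  - by apply: submx_full; rewrite /row_full; apply/eqP.
  - exact: sub0mx.
  - by rewrite qg addr0.
move=> kd.
have eqr : \rank (Gm A) = (d - k)%N by rewrite (eqmx_rank (G_eq hA)) rkK.
pose B := rowsub (maxrankfun (Gm A)) (Gm A).
pose B' := castmx (eqr, erefl d) B : 'M[C]_(d - k, d).
have hB'K : (B' == Km A)%MS.
  apply/eqmxP; apply: eqmx_trans (eqmx_cast _ _) _.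
  by apply: eqmx_trans (eq_maxrowsub _) _; apply/eqmxP; apply: G_eq.
have hfree : row_free B' by rewrite /B' row_free_castmx maxrowsub_free.
have B'real : is_real_mx B'.
  by move=> i j; rewrite /B' castmxE /B mxE; apply: G_real.
exists B'^T; split; first by move=> i j; rewrite mxE.
split.
  move=> th _ hth; apply: trmx_inj; rewrite trmx0.
  apply: (row_free_inj hfree); rewrite mul0mx.
  by rewrite -[B' in LHS]trmxK -trmx_mul hth trmx0.
have vK : forall th : 'cV[C]_(d - k), ((B'^T *m th)^T <= Km A)%MS.
  move=> th; rewrite trmx_mul trmxK.
  by apply: submx_trans (submxMl _ _) _; case/andP: hB'K.
split.
  move=> x th hth; rewrite qg.
  apply: range0; [exact: SW | exact: vK |].
  by rewrite trmx_mul trmxK conjv_mul !is_real_conjv // => i j; rewrite mxE.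
have xL : forall x : 'rV[C]_d, x *m B'^T = 0 <-> (x <= lsubmx A)%MS.
  move=> x; rewrite Wchar; case/andP: hB'K => h1 h2.
  by split; apply: orth_eq; apply/andP; split.
move=> Y; rewrite (charV hA); split.
  case=> x [f [hx hf ->]]; exists x, (f *m pinvmx B')^T; split.
    by apply/xL.
  rewrite qg trmx_mul !trmxK mulmxKpV //.
  by case/andP: hB'K => _ h; apply: submx_trans hf h.
case=> x [th [hx ->]]; exists x, (B'^T *m th)^T; split => //.
- by apply/xL.
- by rewrite qg.
Qed.
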